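(* Let $q-p=3$, $-1<p<2$ and $q>\frac{2p}{2-p}$, and let $r>1$. If $\frac{p(r^q-1)}{q(r^p-1)}\le r^2$, then $I(p,q,r,x)<r^2+1-\frac{r^2}{x^2}-x^2$ for all $x\in(1,r)$. If $\frac{p(r^q-1)}{q(r^p-1)}>r^2$, then $I(p,q,r,x)<r^2-2r+2x-x^2$ for all $x\in(1,r)$.
   Context: For $x\in(1,r)$: $I(p,q,r,x)=\big(1+\frac{r^q-1}{r^p-1}(x^p-1)\big)^{2/q}-x^2$ if $p\ne0$, and $I(0,q,r,x)=\big(1+\frac{r^q-1}{\log r}\log x\big)^{2/q}-x^2$. For $p=0$ the quantity $\frac{p(r^q-1)}{q(r^p-1)}$ is understood as its limit $\frac{r^q-1}{q\log r}$. *)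

(* Defs.v *)
From Stdlib Require Import Reals.
Open Scope R_scope.

Definition I (p q r x : R) : R :=
  if Req_dec_T p 0 then
    Rpower (1 + (Rpower r q - 1) / ln r * ln x) (2 / q) - x ^ 2
  else
    Rpower (1 + (Rpower r q - 1) / (Rpower r p - 1) * (Rpower x p - 1)) (2 / q) - x ^ 2.

(* The quantity p(r^q-1)/(q(r^p-1)), with its limit (r^q-1)/(q log r) at p = 0. *)
Definition ratio (p q r : R) : R :=
  if Req_dec_T p 0 then (Rpower r q - 1) / (q * ln r)
  else p * (Rpower r q - 1) / (q * (Rpower r p - 1)).

(* Main.v *)
Require Import Defs.
From Stdlib Require Import Reals Lra.
From Coquelicot Require Import Coquelicot.
Open Scope R_scope.

Lemma mvt (f df : R -> R) a b : a < b ->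
  (forall t, a <= t <= b -> is_derive f t (df t)) ->
  exists c, a < c < b /\ f b - f a = df c * (b - a).
Proof.
  intros Hab Hd. destruct (MVT_cor2 f df a b Hab) as [c [H1 H2]].
  - intros c Hc. apply is_derive_Reals. now apply Hd.
  - exists c. split; auto.
Qed.

Lemma sign_le (w e lK : R) : 0 < w -> w * (exp e - exp lK) <= 0 -> e <= lK.
Proof.
  intros Hw H. destruct (Rle_lt_dec e lK) as [h|h]; auto.
  apply exp_increasing in h. nra.
Qed.
Lemma sign_ge (w e lK : R) : 0 < w -> 0 <= w * (exp e - exp lK) -> lK <= e.
Proof.
  intros Hw H. destruct (Rle_lt_dec lK e) as [h|h]; auto.
  apply exp_increasing in h. nra.
Qed.
Lemma sign_lt (w e lK : R) : 0 < w -> w * (exp e - exp lK) < 0 -> e < lK.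
Proof.
  intros Hw H. destruct (Rlt_le_dec e lK) as [h|h]; auto.
  destruct h as [h|h]. apply exp_increasing in h. nra. subst. nra.
Qed.

Lemma coreA (a b lK : R) (D dD L dL w : R -> R) : a < b ->
  (forall t, a <= t <= b -> is_derive D t (dD t)) ->
  (forall t, a <= t <= b -> is_derive L t (dL t)) ->
  D a = 0 -> D b = 0 ->
  (forall t, a < t < b -> 0 < w t /\ dD t = w t * (exp (L t) - exp lK)) ->
  lK <= L a ->
  (forall s t, a <= s -> s < t -> t <= b -> dL s <= 0 -> dL t < 0) ->
  forall x, a < x < b -> 0 < D x.
Proof.
  intros Hab HD HL Da Db Hs HLa Hq x Hx.
  destruct (Rlt_le_dec 0 (D x)) as [h|h]; auto. exfalso.
  destruct (mvt D dD a x) as [e [He1 He2]]; [lra| intros; apply HD; lra|].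
  destruct (mvt D dD x b) as [k [Hk1 Hk2]]; [lra| intros; apply HD; lra|].
  destruct (Hs e ltac:(lra)) as [we de].
  destruct (Hs k ltac:(lra)) as [wk dk].
  assert (Le : L e <= lK). { apply (sign_le (w e)); auto. rewrite <- de.
    assert (dD e * (x - a) <= 0) by lra. 
    destruct (Rle_lt_dec (dD e) 0); auto. nra. }
  assert (Lk : lK <= L k). { apply (sign_ge (w k)); auto. rewrite <- dk.
    assert (0 <= dD k * (b - x)) by lra.
    destruct (Rle_lt_dec 0 (dD k)); auto. nra. }
  destruct (mvt L dL a e) as [z1 [Hz1 Ez1]]; [lra| intros; apply HL; lra|].
  destruct (mvt L dL e k) as [z2 [Hz2 Ez2]]; [lra| intros; apply HL; lra|].
  destruct (Rle_lt_dec (dL z1) 0) as [h1|h1].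
  - assert (dL z2 < 0) by (apply (Hq z1 z2); lra). nra.
  - nra.
Qed.

Lemma coreB (a b lK : R) (D dD L dL w : R -> R) : a < b ->
  (forall t, a <= t <= b -> is_derive D t (dD t)) ->
  (forall t, a <= t <= b -> is_derive L t (dL t)) ->
  0 < D a -> D b = 0 ->
  (forall t, a < t < b -> 0 < w t /\ dD t = w t * (exp (L t) - exp lK)) ->
  L b < lK ->
  (forall s t, a <= s -> s < t -> t <= b -> 0 <= dL s -> 0 < dL t) ->
  forall x, a < x < b -> 0 < D x.
Proof.
  intros Hab HD HL Da Db Hs HLb Hq x Hx.
  destruct (Rlt_le_dec 0 (D x)) as [h|h]; auto. exfalso.
  destruct (mvt D dD a x) as [e [He1 He2]]; [lra| intros; apply HD; lra|].
  destruct (mvt D dD x b) as [k [Hk1 Hk2]]; [lra| intros; apply HD; lra|].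
  destruct (Hs e ltac:(lra)) as [we de].
  destruct (Hs k ltac:(lra)) as [wk dk].
  assert (Le : L e < lK). { apply (sign_lt (w e)); auto. rewrite <- de.
    assert (dD e * (x - a) < 0) by lra.
    destruct (Rlt_le_dec (dD e) 0); auto. nra. }
  assert (Lk : lK <= L k). { apply (sign_ge (w k)); auto. rewrite <- dk.
    assert (0 <= dD k * (b - x)) by lra.
    destruct (Rle_lt_dec 0 (dD k)); auto. nra. }
  destruct (mvt L dL e k) as [z1 [Hz1 Ez1]]; [lra| intros; apply HL; lra|].
  destruct (mvt L dL k b) as [z2 [Hz2 Ez2]]; [lra| intros; apply HL; lra|].
  destruct (Rle_lt_dec 0 (dL z1)) as [h1|h1].
  - assert (0 < dL z2) by (apply (Hq z1 z2); lra). nra.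
  - nra.
Qed.
Lemma derD (g dg Lam : R -> R) q K p t : 0 < t -> 0 < g t -> is_derive g t (dg t) ->
  is_derive Lam t (exp((p-1) * ln t)) ->
  is_derive (fun t => exp (q/2 * ln (g t)) - 1 - K * Lam t) t
   (q/2 * exp (q/2 * ln (g t)) * (dg t / g t) - K * exp((p-1) * ln t)).
Proof.
  intros Ht Hg Hdg HL.
  auto_derive.
  - repeat split; auto. now exists (dg t). now exists (exp((p-1) * ln t)).
  - assert (E1 : Derive (fun x : R => g x) t = dg t) by (now apply is_derive_unique).
    assert (E2 : Derive (fun x : R => Lam x) t = exp((p-1) * ln t)) by (now apply is_derive_unique).
    rewrite E1, E2. field. lra.
Qed.
Lemma derL (g dg : R -> R) c0 a b t : 0 < t -> 0 < g t -> is_derive g t (dg t) ->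
  is_derive (fun t => c0 + a * ln (g t) - b * ln t) t (a * (dg t / g t) - b / t).
Proof.
  intros Ht Hg Hdg.
  auto_derive.
  - repeat split; auto. now exists (dg t).
  - assert (E1 : Derive (fun x : R => g x) t = dg t) by (now apply is_derive_unique).
    rewrite E1. field. lra.
Qed.
Lemma derg1 r t : 0 < t -> is_derive (fun t => r^2+1-r^2/t^2) t (2*r^2/t^3).
Proof. intros Ht. auto_derive. nra. field. lra. Qed.
Lemma derg2 r t : is_derive (fun t => r^2-2*r+2*t) t 2.
Proof. auto_derive. auto. ring. Qed.

Lemma exp_sub a b : exp (a - b) = exp a / exp b.
Proof. unfold Rminus, Rdiv. now rewrite exp_plus, exp_Ropp. Qed.

Lemma ln3 t : 0 < t -> 3 * ln t = ln (t^3).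
Proof. intros. rewrite Rpower.ln_pow by auto. simpl. ring. Qed.

Lemma final_step F g q : 0 < q -> 0 < g -> 0 < F -> F < exp (q/2 * ln g) ->
  Rpower F (2/q) < g.
Proof.
  intros Hq Hg HF H. unfold Rpower.
  apply ln_increasing in H; auto. rewrite ln_exp in H.
  rewrite <- (exp_ln g) by auto. apply exp_increasing.
  replace (ln g) with (2/q * (q/2 * ln g)) by (field; lra).
  apply Rmult_lt_compat_l; auto. apply Rdiv_lt_0_compat; lra.
Qed.

Lemma Dr_eq r q : 1 < r -> exp (q/2 * ln (r^2)) = Rpower r q.
Proof.
  intros. unfold Rpower. rewrite Rpower.ln_pow by lra. simpl. f_equal. field.
Qed.

Lemma Lam_pos p (Lam : R -> R) :
  (forall t, 0 < t -> is_derive Lam t (exp((p-1)*ln t))) -> Lam 1 = 0 ->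
  forall t, 1 < t -> 0 < Lam t.
Proof.
  intros HL L1 t Ht.
  destruct (mvt Lam (fun t => exp((p-1)*ln t)) 1 t) as [c [Hc Ec]]; auto.
  intros; apply HL; lra.
  rewrite L1 in Ec. assert (0 < exp ((p-1)*ln c)) by apply exp_pos. nra.
Qed.

Lemma ident1 p q r K t g : 0 < r -> 0 < t -> 0 < g -> 0 < K -> 0 < q -> q = p + 3 ->
  exp((p-1)*ln t) * (exp (ln (q*r^2) + (q-2)/2 * ln g - (p+2) * ln t) - exp (ln K))
  = q/2 * exp (q/2 * ln g) * ((2*r^2/t^3)/g) - K * exp((p-1) * ln t).
Proof.
  intros Hr Ht Hg HK Hq Eq.
  rewrite exp_ln by auto.
  rewrite Rmult_minus_distr_l, <- exp_plus.
  replace ((p - 1) * ln t + (ln (q * r ^ 2) + (q - 2) / 2 * ln g - (p + 2) * ln t)) with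
    (ln (q*r^2) + q/2 * ln g - (ln g + 3 * ln t)) by (rewrite Eq; field).
  rewrite exp_sub, exp_plus, exp_plus, ln3 by auto.
  rewrite (exp_ln (q*r^2)) by (apply Rmult_lt_0_compat; auto; apply pow2_gt_0; lra).
  rewrite (exp_ln g) by auto. rewrite (exp_ln (t^3)) by (apply pow_lt; auto).
  field. split; lra.
Qed.

Lemma ident2 p q K t g : 0 < t -> 0 < g -> 0 < K -> 0 < q -> q = p + 3 ->
  exp((p-1)*ln t) * (exp (ln q + (q-2)/2 * ln g - (p-1) * ln t) - exp (ln K))
  = q/2 * exp (q/2 * ln g) * (2/g) - K * exp((p-1) * ln t).
Proof.
  intros Ht Hg HK Hq Eq.
  rewrite exp_ln by auto.
  rewrite Rmult_minus_distr_l, <- exp_plus.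
  replace ((p - 1) * ln t + (ln q + (q - 2) / 2 * ln g - (p - 1) * ln t)) with
    (ln q + q/2 * ln g - ln g) by (rewrite Eq; field).
  rewrite exp_sub, exp_plus, !exp_ln by auto.
  field. lra.
Qed.

Lemma g1_ge1 r t : 1 <= t -> 1 <= r^2+1-r^2/t^2.
Proof.
  intros Ht. assert (H1 : 1 <= t^2) by nra.
  assert (H2 : r^2/t^2 <= r^2).
  { unfold Rdiv. assert (0 < /t^2) by (apply Rinv_0_lt_compat; lra).
    assert (t^2 * /t^2 = 1) by (field; nra).
    assert (0 <= r^2) by nra. nra. }
  lra.
Qed.

Lemma case1 p q r K (Lam : R -> R) : q = p + 3 -> -1 < p < 2 -> 1 < r ->
  (forall t, 0 < t -> is_derive Lam t (exp((p-1)*ln t))) -> Lam 1 = 0 ->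
  K * Lam r = Rpower r q - 1 -> 0 < K -> K <= q * r^2 ->
  forall x, 1 < x < r -> 1 + K * Lam x < exp (q/2 * ln (r^2+1-r^2/x^2)).
Proof.
  intros Eq Hp Hr HL L1 KL HK Kle x Hx.
  set (g := fun t => r^2+1-r^2/t^2).
  set (dg := fun t => 2*r^2/t^3).
  assert (Hq : 0 < q) by lra.
  assert (gpos : forall t, 1 <= t -> 0 < g t).
  { intros t Ht. pose proof (g1_ge1 r t Ht). unfold g. lra. }
  assert (Hc := coreA 1 r (ln K)
    (fun t => exp (q/2 * ln (g t)) - 1 - K * Lam t)
    (fun t => q/2 * exp (q/2 * ln (g t)) * (dg t / g t) - K * exp((p-1) * ln t))
    (fun t => ln (q*r^2) + (q-2)/2 * ln (g t) - (p+2) * ln t)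
    (fun t => (q-2)/2 * (dg t / g t) - (p+2) / t)
    (fun t => exp((p-1)*ln t)) Hr).
  assert (0 < exp (q/2 * ln (g x)) - 1 - K * Lam x); [|unfold g in *; lra].
  apply Hc; auto; clear Hc.
  - intros t Ht. apply derD; try lra. apply gpos; lra. apply derg1; lra. apply HL; lra.
  - intros t Ht. apply derL; try lra. apply gpos; lra. apply derg1; lra.
  - unfold g. replace (r^2+1-r^2/1^2) with 1 by field. rewrite ln_1, L1.
    replace (q/2*0) with 0 by ring. rewrite exp_0. ring.
  - unfold g. replace (r^2+1-r^2/r^2) with (r^2) by (field; lra).
    rewrite Dr_eq by auto. lra.
  - intros t Ht. split. apply exp_pos. symmetry. unfold dg.
    apply ident1; try lra. apply gpos; lra.
  - unfold g. replace (r^2+1-r^2/1^2) with 1 by field. rewrite ln_1.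
    replace (ln (q * r ^ 2) + (q - 2) / 2 * 0 - (p + 2) * 0) with (ln (q*r^2)) by ring.
    apply ln_le; auto.
  - intros s t Hs Hst Ht Hds.
    assert (key : forall u, 1 <= u ->
      ((q-2)/2 * (dg u / g u) - (p+2) / u) * (u * ((r^2+1)*u^2 - r^2))
       = (p+1)*r^2 - (p+2)*((r^2+1)*u^2 - r^2) /\ 0 < u * ((r^2+1)*u^2 - r^2)).
    { intros u Hu. pose proof (gpos u Hu) as Gu. unfold g in Gu.
      assert (E : (r^2+1)*u^2 - r^2 = u^2 * (r^2+1-r^2/u^2)) by (field; lra).
      assert (0 < (r^2+1)*u^2 - r^2) by (rewrite E; apply Rmult_lt_0_compat; nra).
      split. unfold dg, g. rewrite Eq. field. split; lra.
      apply Rmult_lt_0_compat; lra. }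
    destruct (key s ltac:(lra)) as [Es Ps]. destruct (key t ltac:(lra)) as [Et Pt].
    set (dLs := (q-2)/2 * (dg s / g s) - (p+2) / s) in *.
    set (dLt := (q-2)/2 * (dg t / g t) - (p+2) / t) in *.
    assert (Ns : (p+1)*r^2 - (p+2)*((r^2+1)*s^2 - r^2) <= 0).
    { rewrite <- Es. set (P := s * ((r ^ 2 + 1) * s ^ 2 - r ^ 2)) in *. nra. }
    assert (s^2 < t^2) by nra.
    assert (0 < (p+2)*((r^2+1)*(t^2-s^2))).
    { apply Rmult_lt_0_compat. lra. apply Rmult_lt_0_compat; nra. }
    assert (Nt : (p+1)*r^2 - (p+2)*((r^2+1)*t^2 - r^2) < 0) by nra.
    destruct (Rlt_le_dec dLt 0) as [h|h]; auto.
    set (P := t * ((r ^ 2 + 1) * t ^ 2 - r ^ 2)) in *. nra.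
Qed.

Lemma case2 p q r K (Lam : R -> R) : q = p + 3 -> -1 < p < 2 -> 1 < r ->
  (forall t, 0 < t -> is_derive Lam t (exp((p-1)*ln t))) -> Lam 1 = 0 ->
  K * Lam r = Rpower r q - 1 -> 0 < K -> q * r^2 < K ->
  forall x, 1 < x < r -> 1 + K * Lam x < exp (q/2 * ln (r^2-2*r+2*x)).
Proof.
  intros Eq Hp Hr HL L1 KL HK Kle x Hx.
  set (g := fun t => r^2-2*r+2*t).
  set (dg := fun t : R => 2).
  assert (Hq : 0 < q) by lra.
  assert (gpos : forall t, 1 <= t -> 1 < g t).
  { intros t Ht. unfold g. nra. }
  assert (Hc := coreB 1 r (ln K)
    (fun t => exp (q/2 * ln (g t)) - 1 - K * Lam t)
    (fun t => q/2 * exp (q/2 * ln (g t)) * (dg t / g t) - K * exp((p-1) * ln t))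
    (fun t => ln q + (q-2)/2 * ln (g t) - (p-1) * ln t)
    (fun t => (q-2)/2 * (dg t / g t) - (p-1) / t)
    (fun t => exp((p-1)*ln t)) Hr).
  assert (0 < exp (q/2 * ln (g x)) - 1 - K * Lam x); [|unfold g in *; lra].
  apply Hc; auto; clear Hc.
  - intros t Ht. apply derD; try lra. pose proof (gpos t); lra. apply derg2. apply HL; lra.
  - intros t Ht. apply derL; try lra. pose proof (gpos t); lra. apply derg2.
  - rewrite L1. assert (1 < g 1) by (apply gpos; lra).
    assert (0 < ln (g 1)) by (rewrite <- ln_1; apply ln_increasing; lra).
    assert (exp 0 < exp (q/2 * ln (g 1))).
    { apply exp_increasing. apply Rmult_lt_0_compat; lra. }
    rewrite exp_0 in *.
    lra.
  - unfold g. replace (r^2-2*r+2*r) with (r^2) by ring.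
    rewrite Dr_eq by auto. lra.
  - intros t Ht. split. apply exp_pos. symmetry. unfold dg.
    apply ident2; try lra. pose proof (gpos t); lra.
  - unfold g. replace (r^2-2*r+2*r) with (r^2) by ring.
    rewrite Rpower.ln_pow by lra.
    replace (ln q + (q - 2) / 2 * (INR 2 * ln r) - (p - 1) * ln r) with
      (ln q + ln r + ln r) by (simpl; rewrite Eq; field).
    rewrite <- !ln_mult by (try apply Rmult_lt_0_compat; lra).
    apply ln_increasing. apply Rmult_lt_0_compat; [apply Rmult_lt_0_compat|]; lra.
    replace (q * r * r) with (q * r^2) by ring. lra.
  - intros s t Hs Hst Ht Hds.
    assert (key : forall u, 1 <= u ->
      ((q-2)/2 * (dg u / g u) - (p-1) / u) * (u * g u)
       = (3-p)*u + (1-p)*(r^2-2*r) /\ 0 < u * g u).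
    { intros u Hu. pose proof (gpos u Hu) as Gu.
      split. unfold dg, g in *. rewrite Eq. field. split; lra.
      apply Rmult_lt_0_compat; lra. }
    destruct (key s ltac:(lra)) as [Es Ps]. destruct (key t ltac:(lra)) as [Et Pt].
    set (dLs := (q-2)/2 * (dg s / g s) - (p-1) / s) in *.
    set (dLt := (q-2)/2 * (dg t / g t) - (p-1) / t) in *.
    assert (Ns : 0 <= (3-p)*s + (1-p)*(r^2-2*r)).
    { rewrite <- Es. set (P := s * g s) in *. nra. }
    assert (Nt : 0 < (3-p)*t + (1-p)*(r^2-2*r)) by nra.
    destruct (Rlt_le_dec 0 dLt) as [h|h]; auto.
    set (P := t * g t) in *. nra.
Qed.

Lemma general p q r K (Lam : R -> R) : q = p + 3 -> -1 < p < 2 -> 1 < r ->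
  (forall t, 0 < t -> is_derive Lam t (exp((p-1)*ln t))) -> Lam 1 = 0 ->
  K * Lam r = Rpower r q - 1 ->
  (K / q <= r ^ 2 ->
     forall x, 1 < x < r -> Rpower (1 + K * Lam x) (2/q) - x ^ 2 < r ^ 2 + 1 - r ^ 2 / x ^ 2 - x ^ 2) /\
  (K / q > r ^ 2 ->
     forall x, 1 < x < r -> Rpower (1 + K * Lam x) (2/q) - x ^ 2 < r ^ 2 - 2 * r + 2 * x - x ^ 2).
Proof.
  intros Eq Hp Hr HL L1 KL.
  assert (Hq : 0 < q) by lra.
  assert (Lr : 0 < Lam r) by (apply (Lam_pos p); auto).
  assert (Rq : 1 < Rpower r q).
  { unfold Rpower. assert (exp 0 < exp (q * ln r)).
    { apply exp_increasing. apply Rmult_lt_0_compat; auto.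
      rewrite <- ln_1. apply ln_increasing; lra. }
    rewrite exp_0 in H. lra. }
  assert (HK : 0 < K).
  { destruct (Rlt_le_dec 0 K) as [h|h]; auto. nra. }
  split.
  - intros Hc x Hx.
    assert (Kle : K <= q * r^2).
    { apply (Rmult_le_compat_r q) in Hc; [|lra]. 
      replace (K / q * q) with K in Hc by (field; lra). lra. }
    assert (Lx : 0 < Lam x) by (apply (Lam_pos p); auto; lra).
    pose proof (case1 p q r K Lam Eq Hp Hr HL L1 KL HK Kle x Hx) as H.
    pose proof (g1_ge1 r x ltac:(lra)).
    assert (Rpower (1 + K * Lam x) (2 / q) < r^2+1-r^2/x^2).
    { apply final_step; auto; try lra. nra. }
    lra.
  - intros Hc x Hx.
    assert (Kle : q * r^2 < K).
    { apply (Rmult_lt_compat_r q) in Hc; [|lra]. 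
      replace (K / q * q) with K in Hc by (field; lra). lra. }
    assert (Lx : 0 < Lam x) by (apply (Lam_pos p); auto; lra).
    pose proof (case2 p q r K Lam Eq Hp Hr HL L1 KL HK Kle x Hx) as H.
    assert (Rpower (1 + K * Lam x) (2 / q) < r^2-2*r+2*x).
    { apply final_step; auto; try lra. nra. nra. }
    lra.
Qed.

Theorem lemma7p4 (p q r : R) :
  q - p = 3 -> -1 < p < 2 -> q > 2 * p / (2 - p) -> r > 1 ->
  (ratio p q r <= r ^ 2 ->
     forall x, 1 < x < r -> I p q r x < r ^ 2 + 1 - r ^ 2 / x ^ 2 - x ^ 2) /\
  (ratio p q r > r ^ 2 ->
     forall x, 1 < x < r -> I p q r x < r ^ 2 - 2 * r + 2 * x - x ^ 2).
Proof.
  intros Hqp Hp _ Hr.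
  assert (Eq : q = p + 3) by lra.
  assert (Hq : 0 < q) by lra.
  assert (lr : 0 < ln r) by (rewrite <- ln_1; apply ln_increasing; lra).
  unfold I, ratio. destruct (Req_dec_T p 0) as [p0|p0].
  - subst p.
    set (K := (Rpower r q - 1) / ln r).
    replace ((Rpower r q - 1) / (q * ln r)) with (K / q) by (unfold K; field; lra).
    apply (general 0 q r K ln); auto.
    + intros t Ht. replace (exp ((0 - 1) * ln t)) with (/ t).
      now apply is_derive_ln.
      replace ((0 - 1) * ln t) with (- ln t) by ring. rewrite exp_Ropp, exp_ln; auto.
    + apply ln_1.
    + unfold K. field. lra.
  - set (K := p * (Rpower r q - 1) / (Rpower r p - 1)).
    set (Lam := fun t => (Rpower t p - 1) / p).
    assert (Rp : Rpower r p - 1 <> 0).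
    { unfold Rpower. intro h. assert (exp (p * ln r) = exp 0) by (rewrite exp_0; lra).
      apply exp_inv in H. apply Rmult_integral in H. lra. }
    replace (p * (Rpower r q - 1) / (q * (Rpower r p - 1))) with (K / q) by (unfold K; field; lra).
    assert (EI : forall x, (Rpower r q - 1) / (Rpower r p - 1) * (Rpower x p - 1) = K * Lam x).
    { intros x. unfold K, Lam. field. split; auto. }
    assert (HL : forall t, 0 < t -> is_derive Lam t (exp((p-1)*ln t))).
    { intros t Ht. unfold Lam, Rpower. auto_derive. lra.
      replace ((p - 1) * ln t) with (p * ln t - ln t) by ring.
      rewrite exp_sub, exp_ln by auto. field. split; lra. }
    destruct (general p q r K Lam Eq Hp Hr HL) as [G1 G2].
    + unfold Lam, Rpower. rewrite ln_1. replace (p * 0) with 0 by ring. rewrite exp_0. field. auto.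
    + unfold K, Lam. field. auto.
    + split; intros Hc x Hx; rewrite EI; [apply G1|apply G2]; auto.
Qed.
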